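(* Let $V$ be a finite set partitioned into $A$ and $B$, and for each $u\in V$ let $d_u\ge 1$ and $0\le\lambda_u\le d_u$ be integers. Let $(X_u)_{u\in V}$ be independent random variables with $X_u=d_u$ with probability $\lambda_u/(2d_u)$ and $X_u=0$ otherwise if $u\in B$, and $X_u=-d_u$ with probability $\lambda_u/(2d_u)$ and $X_u=0$ otherwise if $u\in A$. Let $(Y_u)_{u\in V}$ be independent random variables with $Y_u=\lambda_u$ with probability $1/2$ and $Y_u=0$ otherwise if $u\in B$, and $Y_u=-d_u$ with probability $\lambda_u/(2d_u)$ and $Y_u=0$ otherwise if $u\in A$. Let $f$ be a concave and continuous function (defined on an interval containing all possible values of the sums below). Then $\mathbf{E}\big[f\big(\sum_{u\in V}X_u\big)\big]\le\mathbf{E}\big[f\big(\sum_{u\in V}Y_u\big)\big]$. *)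

(* Defs.v *)
From HB Require Import structures.
From mathcomp Require Import all_boot all_order all_algebra.
From mathcomp Require Import all_classical all_reals topology normedtype.
Set Implicit Arguments. Unset Strict Implicit. Unset Printing Implicit Defensive.
Import Order.TTheory GRing.Theory Num.Theory.
Local Open Scope ring_scope.

(* Expectation of f (sum_u Z_u) where (Z_u)_{u in V} are INDEPENDENT random
   variables, Z_u taking value [val u] with probability [p u] and 0 otherwise.
   The joint law is the product law on outcomes w : {ffun V -> bool}
   (w u = true iff Z_u = val u). *)
Definition outcome_sum (R : ringType) (V : finType) (val : V -> R)
  (w : {ffun V -> bool}) : R :=
  \sum_(u : V) (if w u then val u else 0).

Definition outcome_prob (R : ringType) (V : finType) (p : V -> R)
  (w : {ffun V -> bool}) : R :=
  \prod_(u : V) (if w u then p u else 1 - p u).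

Definition E_indep (R : ringType) (V : finType) (val p : V -> R)
  (f : R -> R) : R :=
  \sum_(w : {ffun V -> bool}) outcome_prob p w * f (outcome_sum val w).

Definition concave_on (R : realDomainType) (i : interval R) (f : R -> R) :=
  forall x y t : R, x \in i -> y \in i -> 0 <= t -> t <= 1 ->
    t * f x + (1 - t) * f y <= f (t * x + (1 - t) * y).

(* The data of the lemma; B = complement of A. *)
Definition valX (R : ringType) (V : finType) (A : {set V}) (d : V -> nat)
  (u : V) : R := if u \in A then - (d u)%:R else (d u)%:R.
Definition probX (R : fieldType) (V : finType) (d lam : V -> nat)
  (u : V) : R := (lam u)%:R / (2 * (d u)%:R).
Definition valY (R : ringType) (V : finType) (A : {set V}) (d lam : V -> nat)
  (u : V) : R := if u \in A then - (d u)%:R else (lam u)%:R.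
Definition probY (R : fieldType) (V : finType) (A : {set V}) (d lam : V -> nat)
  (u : V) : R := if u \in A then (lam u)%:R / (2 * (d u)%:R) else 1 / 2.

(* Main.v *)
Require Import Defs.
From HB Require Import structures.
From mathcomp Require Import all_boot all_order all_algebra.
From mathcomp Require Import all_classical all_reals topology normedtype.
From mathcomp Require Import ring lra.
Import Order.TTheory GRing.Theory Num.Theory numFieldNormedType.Exports.
Local Open Scope ring_scope.
Local Open Scope classical_set_scope.

Lemma itv_convex (R : realDomainType) (i : interval R) x y z :
  x \in i -> y \in i -> x <= z -> z <= y -> z \in i.
Proof.
case: i => l u; rewrite !itv_boundlr => /andP[hl _] /andP[_ hu] hxz hzy.
apply/andP; split.
  by apply: (le_trans hl); rewrite leBSide /=.
by apply: le_trans hu; rewrite leBSide /=.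
Qed.

Definition tog {V : finType} (u0 : V) (w : {ffun V -> bool}) : {ffun V -> bool} :=
  [ffun u => if u == u0 then ~~ w u else w u].

Lemma togK {V : finType} (u0 : V) : involutive (tog u0).
Proof.
move=> w; apply/ffunP => u; rewrite !ffunE; case: eqP => //; by rewrite negbK.
Qed.

Lemma single (R : realFieldType) (V : finType) (u0 : V) (val val' p p' : V -> R)
  (g : R -> R)
  (hv : forall u, u != u0 -> val u = val' u)
  (hp : forall u, u != u0 -> p u = p' u)
  (hp01 : forall u, 0 <= p u <= 1)
  (hc : forall w : {ffun V -> bool}, w u0 = false ->
     p u0 * g (outcome_sum val w + val u0) + (1 - p u0) * g (outcome_sum val w)
     <= p' u0 * g (outcome_sum val w + val' u0) + (1 - p' u0) * g (outcome_sum val w)) :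
  E_indep val p g <= E_indep val' p' g.
Proof.
have split_sum : forall (vv pp : V -> R),
  E_indep vv pp g = \sum_(w : {ffun V -> bool} | ~~ w u0)
    (outcome_prob pp w * g (outcome_sum vv w) +
     outcome_prob pp (tog u0 w) * g (outcome_sum vv (tog u0 w))).
  move=> vv pp; rewrite /E_indep (bigID (fun w : {ffun V -> bool} => w u0)) /= addrC big_split /=.
  congr (_ + _).
  rewrite (reindex_inj (inv_inj (togK u0))) /=.
  by apply: eq_bigl => w; rewrite ffunE eqxx.
rewrite !split_sum; apply: ler_sum => w /negbTE w0.
set Q := fun pp : V -> R => \prod_(u | u != u0) (if w u then pp u else 1 - pp u).
set S := fun vv : V -> R => \sum_(u | u != u0) (if w u then vv u else 0).
have hP : forall pp : V -> R, outcome_prob pp w = (1 - pp u0) * Q pp.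
  by move=> pp; rewrite /outcome_prob (bigD1 u0) //= w0.
have hPt : forall pp : V -> R, outcome_prob pp (tog u0 w) = pp u0 * Q pp.
  move=> pp; rewrite /outcome_prob (bigD1 u0) //= ffunE eqxx w0 /=; congr (_ * _).
  by apply: eq_bigr => u /negbTE hu; rewrite ffunE hu.
have hS : forall vv : V -> R, outcome_sum vv w = S vv.
  by move=> vv; rewrite /outcome_sum (bigD1 u0) //= w0 add0r.
have hSt : forall vv : V -> R, outcome_sum vv (tog u0 w) = S vv + vv u0.
  move=> vv; rewrite /outcome_sum (bigD1 u0) //= ffunE eqxx w0 /= addrC; congr (_ + _).
  by apply: eq_bigr => u /negbTE hu; rewrite ffunE hu.
have QE : Q p = Q p'.
  by apply: eq_bigr => u hu; rewrite hp.
have SE : S val = S val'.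
  by apply: eq_bigr => u hu; rewrite hv.
have Q0 : 0 <= Q p.
  apply: prodr_ge0 => u _; case: (w u); have /andP[h1 h2] := hp01 u => //.
  by rewrite subr_ge0.
have := hc w w0; rewrite hS => H.
have := ler_wpM2l Q0 H.
rewrite !hP !hPt !hS !hSt -QE -SE.
set a := g _; set b := g _; set c := g _ => H2.
lra.
Qed.

Section Main.
Variables (R : realType) (V : finType) (A : {set V}) (d lam : V -> nat).
Hypotheses (hd : forall u, (1 <= d u)%N) (hlam : forall u, (lam u <= d u)%N).

Definition hv (S : {set V}) (u : V) : R :=
  if u \in S then valY R A d lam u else valX R A d u.
Definition hpr (S : {set V}) (u : V) : R :=
  if u \in S then probY R A d lam u else probX R d lam u.

Lemma d_gt0 u : 0 < (d u)%:R :> R.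
Proof. by rewrite ltr0n; apply: hd. Qed.

Lemma lam_le u : (lam u)%:R <= (d u)%:R :> R.
Proof. by rewrite ler_nat. Qed.

Lemma probXE u : probX R d lam u = ((lam u)%:R / (d u)%:R) / 2.
Proof. have := d_gt0 u; rewrite /probX => h; field; rewrite lt0r_neq0 //. Qed.

Lemma t01 u : 0 <= (lam u)%:R / (d u)%:R :> R /\ (lam u)%:R / (d u)%:R <= 1 :> R.
Proof.
split; first by rewrite divr_ge0.
by rewrite ler_pdivrMr ?d_gt0 // mul1r lam_le.
Qed.

Lemma hpr01 S u : 0 <= hpr S u <= 1.
Proof.
have [h1 h2] := t01 u.
rewrite /hpr /probY; case: (u \in S); case: (u \in A);
  rewrite ?probXE; apply/andP; split; lra.
Qed.

Lemma tog_sum (vv : V -> R) (x : V) (w : {ffun V -> bool}) : w x = false ->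
  outcome_sum vv (tog x w) = outcome_sum vv w + vv x.
Proof.
move=> w0; rewrite /outcome_sum (bigD1 x) //= [in RHS](bigD1 x) //= ffunE eqxx w0 /=.
rewrite add0r addrC; congr (_ + _).
by apply: eq_bigr => u /negbTE hu; rewrite ffunE hu.
Qed.

Lemma hv_in (i : interval R)
  (hXi : forall w : {ffun V -> bool}, outcome_sum (valX R A d) w \in i) S w :
  outcome_sum (hv S) w \in i.
Proof.
apply: (itv_convex _ _ _ _ _ (hXi [ffun u => (u \in A) && w u])
                   (hXi [ffun u => (u \notin A) || w u])).
  apply: ler_sum => u _; rewrite ffunE /hv /valY /valX.
  case: (u \in A) => /=; first by case: (u \in S).
  by case: (w u) => //; case: (u \in S) => //.
apply: ler_sum => u _; rewrite ffunE /hv /valY /valX.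
case: (u \in A) => /=; first by case: (u \in S).
by case: (w u) => //; case: (u \in S) => //; rewrite ?lam_le.
Qed.

End Main.

Theorem lemma10 (R : realType) (V : finType) (A : {set V}) (d lam : V -> nat)
  (hd : forall u, (1 <= d u)%N) (hlam : forall u, (lam u <= d u)%N)
  (i : interval R) (f : R -> R)
  (hXi : forall w : {ffun V -> bool}, outcome_sum (valX R A d) w \in i)
  (hYi : forall w : {ffun V -> bool}, outcome_sum (valY R A d lam) w \in i)
  (hconc : concave_on i f)
  (hcont : {within [set x | x \in i], continuous f}) :
  E_indep (valX R A d) (probX R d lam) f <=
  E_indep (valY R A d lam) (probY R A d lam) f.
Proof.
have key : forall n (S : {set V}), #|S| = n ->
    E_indep (valX R A d) (probX R d lam) f <= E_indep (hv R V A d lam S) (hpr R V A d lam S) f.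
  elim=> [|n IH] S hS.
    move/eqP: hS; rewrite cards_eq0 => /eqP ->.
    have -> : hv R V A d lam finset.set0 = valX R A d by apply: boolp.funext => u; rewrite /hv inE.
    have -> : hpr R V A d lam finset.set0 = probX R d lam by apply: boolp.funext => u; rewrite /hpr inE.
    by [].
  have [S0|[x xS]] := set_0Vmem S; first by move: hS; rewrite S0 cards0.
  have hS' : #|S :\ x| = n by move: hS; rewrite (cardsD1 x) xS add1n => -[].
  apply: (le_trans (IH _ hS')).
  apply: (@single R V x).
  - by move=> u ux; rewrite /hv in_setD1 ux.
  - by move=> u ux; rewrite /hpr in_setD1 ux.
  - by move=> u; apply: (@hpr01 R V A d lam hd hlam).
  move=> w w0.
  set s := outcome_sum _ w.
  rewrite /hv /hpr !in_setD1 eqxx xS /=.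
  rewrite /valX /valY /probY; case: ifP => xA; first by rewrite lexx.
  rewrite (@probXE R V d lam hd).
  have [t0 t1] := @t01 R V d lam hd hlam x.
  set t := (lam x)%:R / (d x)%:R.
  have hsi : s \in i by exact: (@hv_in R V A d lam hlam i hXi (S :\ x) w).
  have hsdi : s + (d x)%:R \in i.
    have := @hv_in R V A d lam hlam i hXi (S :\ x) (tog x w).
    by rewrite tog_sum // /hv in_setD1 eqxx /= /valX xA.
  have := hconc _ _ _ hsdi hsi t0 t1.
  have -> : t * (s + (d x)%:R) + (1 - t) * s = s + (lam x)%:R.
    rewrite /t; have := @d_gt0 R V d hd x => h; field; rewrite lt0r_neq0 //.
  rewrite -/t => H.
  move: H; set a := f _; set b := f _; set c := f _ => H; lra.
have := key _ (finset.setT : {set V}) erefl.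
have -> : hv R V A d lam (finset.setT : {set V}) = valY R A d lam by apply: boolp.funext => u; rewrite /hv inE.
by have -> : hpr R V A d lam (finset.setT : {set V}) = probY R A d lam by apply: boolp.funext => u; rewrite /hpr inE.
Qed.
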